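(* Let $(\mathcal{A},\mathcal{E})$ be an idempotent complete exact category with enough $\mathcal{E}$-projectives and $\mathcal{E}$-injectives, and let $\mathcal{T}\subseteq\mathcal{A}$. Then the following are equivalent: (a) $\mathcal{T}$ is Zhu-Zhuang $n$-tilting in $(\mathcal{A},\mathcal{E})$ and $\mathcal{T}$ is precovering in $\mathcal{T}^{\perp_{\mathcal{E}}}$; (b) $\mathcal{T}$ is small $n$-tilting in $(\mathcal{A},\mathcal{E})$; (c) $\mathcal{T}$ is Auslander-Solberg $n$-tilting in $(\mathcal{A},\mathcal{E})$ and $\mathcal{T}$ is precovering in $\mathcal{T}^{\perp_{\mathcal{E}}}$. Furthermore, if one of these conditions holds, then $\mathrm{Proj}_{\mathcal{E}}(\mathcal{A})\subseteq\mathcal{T}^{\vee}_{n,\mathcal{E}}$.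
   Context: $(\mathcal{A},\mathcal{E})$ is an exact category (in the sense of Quillen/Bühler): $\mathcal{A}$ additive, $\mathcal{E}$ a class of kernel–cokernel pairs (conflations, written $0\to X\to Y\to Z\to0$) satisfying the exact category axioms; it is idempotent complete if every idempotent has a kernel. $\mathrm{Proj}_{\mathcal{E}}(\mathcal{A})$ ($\mathrm{Inj}_{\mathcal{E}}(\mathcal{A})$): objects $P$ with $\mathrm{Hom}(P,-)$ (resp. $\mathrm{Hom}(-,P)$) exact on conflations; enough $\mathcal{E}$-projectives (injectives) means every object is the end (start) of a conflation with projective middle term (injective middle term). $\mathrm{Ext}^k_{\mathcal{A}}$ denotes the Ext groups of the exact category ($\mathrm{Ext}^1$ = classes of conflations, $\mathrm{Ext}^k(X,Y)\cong\mathrm{Ext}^1(X_{k-1},Y)$ for a $(k-1)$-th syzygy $X_{k-1}$ of $X$). $\mathcal{T}^{\perp_{\mathcal{E}}}=\{A:\mathrm{Ext}^i(T,A)=0\ \forall T\in\mathcal{T},i>0\}$. $\mathrm{pd}_{\mathcal{E}}(A)=\min\{n:\mathrm{Ext}^i(A,-)=0\ \forall i>n\}$, supremum for classes. $\mathrm{add}(\mathcal{T})$: direct summands of finite direct sums of objects of $\mathcal{T}$. $\mathcal{T}^{\vee}_{n,\mathcal{E}}$: objects $A$ admitting conflations $0\to K_i\to X_i\to K_{i+1}\to0$ ($0\le i\le m$, $m\le n$) with $K_0=A$, $K_{m+1}=0$, $X_i\in\mathcal{T}$; $\mathcal{T}^{\vee}_{\mathcal{E}}=\bigcup_n\mathcal{T}^{\vee}_{n,\mathcal{E}}$.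 $\omega$ is a relative $\mathcal{E}$-generator in a class $\mathcal{Y}$ if $\omega\subseteq\mathcal{Y}$ and every $Y\in\mathcal{Y}$ admits a conflation $0\to Y'\to W\to Y\to0$ with $W\in\omega$, $Y'\in\mathcal{Y}$. $\mathcal{T}$ is precovering in $\mathcal{Y}$ if every object of $\mathcal{Y}$ has a $\mathcal{T}$-precover ($f:T\to Y$, $T\in\mathcal{T}$, $\mathrm{Hom}(T',f)$ surjective for all $T'\in\mathcal{T}$). Small $n$-tilting: (TEC0) $\mathcal{T}=\mathrm{add}(\mathcal{T})$; (TEC1) $\mathrm{pd}_{\mathcal{E}}(\mathcal{T})\le n$; (TEC2) $\mathcal{T}\subseteq\mathcal{T}^{\perp_{\mathcal{E}}}$; (TEC3) some $\omega\subseteq\mathcal{T}^{\vee}_{\mathcal{E}}$ is a relative $\mathcal{E}$-generator in $\mathcal{A}$; (TEC4) $\mathcal{T}$ is precovering in $\mathcal{T}^{\perp_{\mathcal{E}}}$. Zhu-Zhuang $n$-tilting: $\mathcal{T}=\mathrm{add}(\mathcal{T})$, $\mathrm{pd}_{\mathcal{E}}(\mathcal{T})\le n$, and $\mathcal{T}$ is a relative $\mathcal{E}$-generator in $\mathcal{T}^{\perp_{\mathcal{E}}}$. Auslander-Solberg $n$-tilting: $\mathcal{T}=\mathrm{add}(\mathcal{T})$, $\mathrm{pd}_{\mathcal{E}}(\mathcal{T})\le n$, $\mathcal{T}\subseteq\mathcal{T}^{\perp_{\mathcal{E}}}$, and $\mathrm{Proj}_{\mathcal{E}}(\mathcal{A})\subseteq\mathcal{T}^{\vee}_{\mathcal{E}}$.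 *)

(* Defs.v *)
From HB Require Import structures.
From mathcomp Require Import all_boot all_algebra.
Set Implicit Arguments. Unset Strict Implicit. Unset Printing Implicit Defensive.
Import GRing.Theory.
Local Open Scope ring_scope.

Record PreAddCat := {
  obj :> Type;
  hom : obj -> obj -> zmodType;
  comp : forall X Y Z : obj, hom Y Z -> hom X Y -> hom X Z;
  idm : forall X : obj, hom X X;
  compA : forall X Y Z W (h : hom Z W) (g : hom Y Z) (f : hom X Y),
      comp h (comp g f) = comp (comp h g) f;
  comp1m : forall X Y (f : hom X Y), comp (idm Y) f = f;
  compm1 : forall X Y (f : hom X Y), comp f (idm X) = f;
  compDl : forall X Y Z (g g' : hom Y Z) (f : hom X Y),
      comp (g + g') f = comp g f + comp g' f;
  compDr : forall X Y Z (g : hom Y Z) (f f' : hom X Y),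
      comp g (f + f') = comp g f + comp g f';
}.
Arguments hom {C} : rename.
Arguments comp {C X Y Z} : rename.
Arguments idm {C} X : rename.

Section Defs.
Variable C : PreAddCat.

Definition is_zero_obj (Z : C) : Prop :=
  (forall X (f : hom Z X), f = 0) /\ (forall X (f : hom X Z), f = 0).

Definition is_iso (X Y : C) (f : hom X Y) : Prop :=
  exists g : hom Y X, comp g f = idm X /\ comp f g = idm Y.

Definition is_additive : Prop :=
  (exists Z : C, is_zero_obj Z) /\
  (forall X Y : C, exists (S : C) (i1 : hom X S) (i2 : hom Y S)
        (p1 : hom S X) (p2 : hom S Y),
      [/\ comp p1 i1 = idm X, comp p2 i2 = idm Y, comp p1 i2 = 0,
          comp p2 i1 = 0 & comp i1 p1 + comp i2 p2 = idm S]).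

Definition is_kernel (X Y Z : C) (f : hom X Y) (g : hom Y Z) : Prop :=
  comp g f = 0 /\
  forall W (h : hom W Y), comp g h = 0 ->
    exists u : hom W X, comp f u = h /\ forall u' : hom W X, comp f u' = h -> u' = u.

Definition is_cokernel (X Y Z : C) (f : hom X Y) (g : hom Y Z) : Prop :=
  comp g f = 0 /\
  forall W (h : hom Y W), comp h f = 0 ->
    exists u : hom Z W, comp u g = h /\ forall u' : hom Z W, comp u' g = h -> u' = u.

Definition is_kcpair (X Y Z : C) (f : hom X Y) (g : hom Y Z) : Prop :=
  is_kernel f g /\ is_cokernel f g.

Definition confl_class := forall X Y Z : C, hom X Y -> hom Y Z -> Prop.

Section Exact.
Variable E : confl_class.

Definition inflation (X Y : C) (f : hom X Y) : Prop := exists Z (g : hom Y Z), E f g.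
Definition deflation (Y Z : C) (g : hom Y Z) : Prop := exists X (f : hom X Y), E f g.

Definition is_pushout (A B A' B' : C) (f : hom A B) (t : hom A A') (f' : hom A' B')
    (t' : hom B B') : Prop :=
  comp t' f = comp f' t /\
  forall W (x : hom B W) (y : hom A' W), comp x f = comp y t ->
    exists u : hom B' W, (comp u t' = x /\ comp u f' = y) /\
      forall u' : hom B' W, comp u' t' = x -> comp u' f' = y -> u' = u.

Definition is_pullback (B' C' B C0 : C) (g' : hom B' C') (t' : hom B' B) (g : hom B C0)
    (t : hom C' C0) : Prop :=
  comp g t' = comp t g' /\
  forall W (x : hom W B) (y : hom W C'), comp g x = comp t y ->
    exists u : hom W B', (comp t' u = x /\ comp g' u = y) /\
      forall u' : hom W B', comp t' u' = x -> comp g' u' = y -> u' = u.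

Definition is_exact_structure : Prop :=
  [/\ (forall X Y Z (f : hom X Y) (g : hom Y Z), E f g -> is_kcpair f g),
      (forall X Y Z X' Y' Z' (f : hom X Y) (g : hom Y Z) (f' : hom X' Y')
          (g' : hom Y' Z') (a : hom X X') (b : hom Y Y') (c : hom Z Z'),
          E f g -> is_iso a -> is_iso b -> is_iso c ->
          comp f' a = comp b f -> comp g' b = comp c g -> E f' g'),
      (forall X : C, inflation (idm X)) /\ (forall X : C, deflation (idm X)),
      (forall X Y Z (f : hom X Y) (f' : hom Y Z),
          inflation f -> inflation f' -> inflation (comp f' f)) /\
      (forall X Y Z (g : hom X Y) (g' : hom Y Z),
          deflation g -> deflation g' -> deflation (comp g' g)) &
      (forall A B A' (f : hom A B) (t : hom A A'), inflation f ->
          exists B' (f' : hom A' B') (t' : hom B B'),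
            is_pushout f t f' t' /\ inflation f') /\
      (forall B C0 C' (g : hom B C0) (t : hom C' C0), deflation g ->
          exists B' (g' : hom B' C') (t' : hom B' B),
            is_pullback g' t' g t /\ deflation g')].

Definition idempotent_complete : Prop :=
  forall X (e : hom X X), comp e e = e -> exists K (k : hom K X), is_kernel k e.

(* Hom(P,-) exact on conflations *)
Definition is_projective (P : C) : Prop :=
  forall X Y Z (f : hom X Y) (g : hom Y Z), E f g ->
    [/\ (forall h : hom P X, comp f h = 0 -> h = 0),
        (forall h : hom P Y, comp g h = 0 -> exists h' : hom P X, comp f h' = h) &
        (forall h : hom P Z, exists h' : hom P Y, comp g h' = h)].

(* Hom(-,I) exact on conflations *)
Definition is_injective (I : C) : Prop :=
  forall X Y Z (f : hom X Y) (g : hom Y Z), E f g ->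
    [/\ (forall h : hom Z I, comp h g = 0 -> h = 0),
        (forall h : hom Y I, comp h f = 0 -> exists h' : hom Z I, comp h' g = h) &
        (forall h : hom X I, exists h' : hom Y I, comp h' f = h)].

Definition enough_projectives : Prop :=
  forall Z : C, exists (P X : C) (f : hom X P) (g : hom P Z), is_projective P /\ E f g.

Definition enough_injectives : Prop :=
  forall X : C, exists (I Z : C) (f : hom X I) (g : hom I Z), is_injective I /\ E f g.

(* Ext^1(X,Y) = 0 : every conflation 0 -> Y -> M -> X -> 0 splits *)
Definition Ext1_zero (X Y : C) : Prop :=
  forall M (f : hom Y M) (g : hom M X), E f g -> exists s : hom X M, comp g s = idm X.

Fixpoint syzygy (k : nat) (X Z : C) : Prop :=
  match k with
  | 0%N => exists a : hom Z X, is_iso a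
  | k'.+1 => exists (W P : C) (f : hom Z P) (g : hom P W),
      syzygy k' X W /\ is_projective P /\ E f g
  end.

(* Ext^k(X,Y) = 0 for k >= 1, via Ext^k(X,Y) = Ext^1(X_{k-1},Y) *)
Definition Ext_zero (k : nat) (X Y : C) : Prop :=
  forall Z, syzygy k.-1 X Z -> Ext1_zero Z Y.

Definition perp (T : C -> Prop) (A : C) : Prop :=
  forall X, T X -> forall i : nat, (0 < i)%N -> Ext_zero i X A.

Definition pd_le (T : C -> Prop) (n : nat) : Prop :=
  forall X, T X -> forall i : nat, (n < i)%N -> forall Y, Ext_zero i X Y.

(* add(T): direct summands of finite direct sums of objects of T *)
Definition addT (T : C -> Prop) (X : C) : Prop :=
  exists (k : nat) (Ti : 'I_k -> C) (s : forall i, hom X (Ti i)) (r : forall i, hom (Ti i) X),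
    (forall i, T (Ti i)) /\ \sum_(i < k) comp (r i) (s i) = idm X.

Definition add_closed (T : C -> Prop) : Prop := forall X, T X <-> addT T X.

(* chain m A : conflations 0 -> K_i -> X_i -> K_{i+1} -> 0, 0<=i<=m,
   K_0 = A, K_{m+1} = 0, X_i in T *)
Fixpoint coreschain (T : C -> Prop) (m : nat) (A : C) : Prop :=
  match m with
  | 0%N => exists (X K : C) (f : hom A X) (g : hom X K), T X /\ E f g /\ is_zero_obj K
  | m'.+1 => exists (X K : C) (f : hom A X) (g : hom X K), T X /\ E f g /\ coreschain T m' K
  end.

Definition Tvee_n (T : C -> Prop) (n : nat) (A : C) : Prop :=
  exists m : nat, (m <= n)%N /\ coreschain T m A.

Definition Tvee (T : C -> Prop) (A : C) : Prop := exists n, Tvee_n T n A.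

Definition rel_generator (w Y : C -> Prop) : Prop :=
  (forall X, w X -> Y X) /\
  forall X, Y X -> exists (Y' W : C) (f : hom Y' W) (g : hom W X), w W /\ Y Y' /\ E f g.

Definition precovering (T Y : C -> Prop) : Prop :=
  forall X, Y X -> exists (T0 : C) (f : hom T0 X),
    T T0 /\ forall T' (h : hom T' X), T T' -> exists h' : hom T' T0, comp f h' = h.

Definition small_tilting (n : nat) (T : C -> Prop) : Prop :=
  [/\ add_closed T, pd_le T n, (forall X, T X -> perp T X),
      (exists w : C -> Prop, (forall X, w X -> Tvee T X) /\ rel_generator w (fun _ => True))
    & precovering T (perp T)].

Definition ZZ_tilting (n : nat) (T : C -> Prop) : Prop :=
  [/\ add_closed T, pd_le T n & rel_generator T (perp T)].

Definition AS_tilting (n : nat) (T : C -> Prop) : Prop :=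
  [/\ add_closed T, pd_le T n, (forall X, T X -> perp T X)
    & forall P, is_projective P -> Tvee T P].

End Exact.
End Defs.

(* Main.v *)
Require Import Defs.
From mathcomp Require Import all_boot all_algebra.
Set Implicit Arguments. Unset Strict Implicit. Unset Printing Implicit Defensive.
Import GRing.Theory.
Local Open Scope ring_scope.

Local Notation hom := Defs.hom.
Local Notation comp := Defs.comp.
Local Notation compA := Defs.compA.
Local Notation comp1m := Defs.comp1m.
Local Notation compm1 := Defs.compm1.
Section Basic.
Variable C : PreAddCat.
Local Notation "g ⊚ f" := (Defs.comp g f) (at level 40, left associativity).

Lemma comp0l (X Y Z : C) (f : hom X Y) : (0 : hom Y Z) ⊚ f = 0.
Proof.
have H := Defs.compDl (0 : hom Y Z) 0 f; rewrite addr0 in H.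
by apply: (@addrI _ (0 ⊚ f)); rewrite -H addr0.
Qed.
Lemma comp0r (X Y Z : C) (g : hom Y Z) : g ⊚ (0 : hom X Y) = 0.
Proof.
have H := Defs.compDr g (0 : hom X Y) 0; rewrite addr0 in H.
by apply: (@addrI _ (g ⊚ 0)); rewrite -H addr0.
Qed.
Lemma compNl (X Y Z : C) (g : hom Y Z) (f : hom X Y) : (- g) ⊚ f = - (g ⊚ f).
Proof.
apply/eqP; rewrite -subr_eq0 opprK -Defs.compDl addNr comp0l //.
Qed.
Lemma compNr (X Y Z : C) (g : hom Y Z) (f : hom X Y) : g ⊚ (- f) = - (g ⊚ f).
Proof.
apply/eqP; rewrite -subr_eq0 opprK -Defs.compDr addNr comp0r //.
Qed.
Lemma compBl (X Y Z : C) (g g' : hom Y Z) (f : hom X Y) : (g - g') ⊚ f = g ⊚ f - g' ⊚ f.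
Proof. by rewrite Defs.compDl compNl. Qed.
Lemma compBr (X Y Z : C) (g : hom Y Z) (f f' : hom X Y) : g ⊚ (f - f') = g ⊚ f - g ⊚ f'.
Proof. by rewrite Defs.compDr compNr. Qed.

End Basic.
Section Exact1.
Variables (C : PreAddCat) (E : confl_class C).
Hypothesis HE : is_exact_structure E.
Local Notation "g ⊚ f" := (Defs.comp g f) (at level 40, left associativity).

Lemma kernel_mono (X Y Z : C) (f : hom X Y) (g : hom Y Z) W (x y : hom W X) :
  is_kernel f g -> f ⊚ x = f ⊚ y -> x = y.
Proof.
case=> Hgf Hu Hxy.
have H0 : g ⊚ (f ⊚ x) = 0 by rewrite compA Hgf comp0l.
case: (Hu _ _ H0) => u [_ Hun].
by rewrite (Hun x erefl) (Hun y (esym Hxy)).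
Qed.

Lemma cokernel_epi (X Y Z : C) (f : hom X Y) (g : hom Y Z) W (x y : hom Z W) :
  is_cokernel f g -> x ⊚ g = y ⊚ g -> x = y.
Proof.
case=> Hgf Hu Hxy.
have H0 : (x ⊚ g) ⊚ f = 0 by rewrite -compA Hgf comp0r.
case: (Hu _ _ H0) => u [_ Hun].
by rewrite (Hun x erefl) (Hun y (esym Hxy)).
Qed.

Lemma kernel_fac (X Y Z : C) (f : hom X Y) (g : hom Y Z) W (h : hom W Y) :
  is_kernel f g -> g ⊚ h = 0 -> exists u, f ⊚ u = h.
Proof. by case=> _ Hu /Hu [u [? _]]; exists u. Qed.

Lemma cokernel_fac (X Y Z : C) (f : hom X Y) (g : hom Y Z) W (h : hom Y W) :
  is_cokernel f g -> h ⊚ f = 0 -> exists u, u ⊚ g = h.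
Proof. by case=> _ Hu /Hu [u [? _]]; exists u. Qed.

Lemma confl_kc (X Y Z : C) (f : hom X Y) (g : hom Y Z) : E f g -> is_kcpair f g.
Proof. by case: HE => H _ _ _ _; apply: H. Qed.

Lemma confl_ker (X Y Z : C) (f : hom X Y) (g : hom Y Z) : E f g -> is_kernel f g.
Proof. by move/confl_kc=> []. Qed.
Lemma confl_cok (X Y Z : C) (f : hom X Y) (g : hom Y Z) : E f g -> is_cokernel f g.
Proof. by move/confl_kc=> []. Qed.
Lemma confl0 (X Y Z : C) (f : hom X Y) (g : hom Y Z) : E f g -> g ⊚ f = 0.
Proof. by move/confl_ker=> []. Qed.

Lemma confl_iso (X Y Z X' Y' Z' : C) (f : hom X Y) (g : hom Y Z) (f' : hom X' Y')
    (g' : hom Y' Z') (a : hom X X') (b : hom Y Y') (c : hom Z Z') :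
  E f g -> is_iso a -> is_iso b -> is_iso c ->
  f' ⊚ a = b ⊚ f -> g' ⊚ b = c ⊚ g -> E f' g'.
Proof. by case: HE => _ H _ _ _; apply: H. Qed.

Lemma iso_id (X : C) : is_iso (idm X).
Proof. by exists (idm X); rewrite comp1m. Qed.

Lemma E_iso_ker (X X' Y Z : C) (f : hom X Y) (f' : hom X' Y) (g : hom Y Z) :
  E f g -> is_kernel f' g -> E f' g.
Proof.
move=> Hfg Hk'.
have Hk := confl_ker Hfg.
case: (kernel_fac Hk (proj1 Hk')) => u Hu.
case: (kernel_fac Hk' (proj1 Hk)) => w Hw.
apply: (confl_iso (a := w) (b := idm Y) (c := idm Z) Hfg).
- exists u; split.
  + by apply: (kernel_mono Hk); rewrite compA Hu Hw compm1.
  + by apply: (kernel_mono Hk'); rewrite compA Hw Hu compm1.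
- exact: iso_id.
- exact: iso_id.
- by rewrite Hw comp1m.
- by rewrite comp1m compm1.
Qed.

Lemma E_iso_cok (X Y Z Z' : C) (f : hom X Y) (g : hom Y Z) (g' : hom Y Z') :
  E f g -> is_cokernel f g' -> E f g'.
Proof.
move=> Hfg Hk'.
have Hk := confl_cok Hfg.
case: (cokernel_fac Hk (proj1 Hk')) => u Hu.
case: (cokernel_fac Hk' (proj1 Hk)) => w Hw.
apply: (confl_iso (a := idm X) (b := idm Y) (c := u) Hfg).
- exact: iso_id.
- exact: iso_id.
- exists w; split.
  + by apply: (cokernel_epi Hk); rewrite -compA Hu Hw comp1m.
  + by apply: (cokernel_epi Hk'); rewrite -compA Hw Hu comp1m.
- by rewrite comp1m compm1.
- by rewrite compm1 Hu.
Qed.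

Lemma E_iso_mid (X Y Y' Z : C) (f : hom X Y) (g : hom Y Z) (phi : hom Y' Y) (psi : hom Y Y') :
  E f g -> psi ⊚ phi = idm Y' -> phi ⊚ psi = idm Y -> E (psi ⊚ f) (g ⊚ phi).
Proof.
move=> Hfg H1 H2.
apply: (confl_iso (a := idm X) (b := psi) (c := idm Z) Hfg).
- exact: iso_id.
- by exists phi.
- exact: iso_id.
- by rewrite compm1.
- by rewrite -compA H2 compm1 comp1m.
Qed.

Lemma pb_ex (B C0 B' C' : C) (g' : hom B' C') (t' : hom B' B) (g : hom B C0) (t : hom C' C0)
   W (x : hom W B) (y : hom W C') :
  is_pullback g' t' g t -> g ⊚ x = t ⊚ y -> exists u, t' ⊚ u = x /\ g' ⊚ u = y.
Proof. by case=> _ Hu /Hu [u [H _]]; exists u. Qed.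

Lemma pb_uniq (B C0 B' C' : C) (g' : hom B' C') (t' : hom B' B) (g : hom B C0) (t : hom C' C0)
   W (u1 u2 : hom W B') :
  is_pullback g' t' g t -> t' ⊚ u1 = t' ⊚ u2 -> g' ⊚ u1 = g' ⊚ u2 -> u1 = u2.
Proof.
case=> Hc Hu H1 H2.
have H : g ⊚ (t' ⊚ u1) = t ⊚ (g' ⊚ u1) by rewrite !compA Hc.
case: (Hu _ _ _ H) => u [_ Hun].
by rewrite (Hun u1 erefl erefl) (Hun u2 (esym H1) (esym H2)).
Qed.

Lemma po_ex (A B A' B' : C) (f : hom A B) (t : hom A A') (f' : hom A' B') (t' : hom B B')
   W (x : hom B W) (y : hom A' W) :
  is_pushout f t f' t' -> x ⊚ f = y ⊚ t -> exists u, u ⊚ t' = x /\ u ⊚ f' = y.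
Proof. by case=> _ Hu /Hu [u [H _]]; exists u. Qed.

Lemma po_uniq (A B A' B' : C) (f : hom A B) (t : hom A A') (f' : hom A' B') (t' : hom B B')
   W (u1 u2 : hom B' W) :
  is_pushout f t f' t' -> u1 ⊚ t' = u2 ⊚ t' -> u1 ⊚ f' = u2 ⊚ f' -> u1 = u2.
Proof.
case=> Hc Hu H1 H2.
have H : (u1 ⊚ t') ⊚ f = (u1 ⊚ f') ⊚ t by rewrite -!compA Hc.
case: (Hu _ _ _ H) => u [_ Hun].
by rewrite (Hun u1 erefl erefl) (Hun u2 (esym H1) (esym H2)).
Qed.

Lemma pb_sym (B C0 B' C' : C) (g' : hom B' C') (t' : hom B' B) (g : hom B C0) (t : hom C' C0) :
  is_pullback g' t' g t -> is_pullback t' g' t g.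
Proof.
case=> Hc Hu; split; first by rewrite Hc.
move=> W x y Hxy.
case: (Hu W y x (esym Hxy)) => u [[H1 H2] Hun].
by exists u; split=> // u' H1' H2'; apply: Hun.
Qed.

Lemma PB (B C0 B' C' K : C) (k : hom K B) (g : hom B C0) (g' : hom B' C')
    (t' : hom B' B) (t : hom C' C0) :
  E k g -> is_pullback g' t' g t -> exists k' : hom K B', t' ⊚ k' = k /\ E k' g'.
Proof.
move=> Hkg Hpb.
case: HE => _ _ _ _ [_ HE2].
case: (HE2 _ _ _ g t (ex_intro _ K (ex_intro _ k Hkg))) =>
  B2 [g2 [t2 [Hpb2 [K2 [k2 Hk2]]]]].
have Hc := proj1 Hpb; have Hc2 := proj1 Hpb2.
case: (pb_ex Hpb2 Hc) => u [Hu1 Hu2].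
case: (pb_ex Hpb Hc2) => v [Hv1 Hv2].
have Hvu : v ⊚ u = idm B'.
  by apply: (pb_uniq Hpb); rewrite compm1 compA ?Hv1 ?Hv2.
have Huv : u ⊚ v = idm B2.
  by apply: (pb_uniq Hpb2); rewrite compm1 compA ?Hu1 ?Hu2.
have Edef : E (v ⊚ k2) g'.
  apply: (confl_iso (a := idm K2) (b := v) (c := idm C') Hk2).
  - exact: iso_id.
  - by exists u.
  - exact: iso_id.
  - by rewrite compm1.
  - by rewrite Hv2 comp1m.
have H0 : g ⊚ k = t ⊚ 0 by rewrite (confl0 Hkg) comp0r.
case: (pb_ex Hpb H0) => k' [Hk'1 Hk'2].
exists k'; split => //.
apply: (E_iso_ker Edef); split => // W h Hh.
have Hk := confl_ker Hkg.
have : g ⊚ (t' ⊚ h) = 0 by rewrite compA Hc -compA Hh comp0r.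
case/(kernel_fac Hk) => x Hx.
have Hkx : k' ⊚ x = h.
  apply: (pb_uniq Hpb); first by rewrite compA Hk'1 Hx.
  by rewrite compA Hk'2 comp0l Hh.
exists x; split => // u' Hu'.
apply: (kernel_mono Hk); rewrite -Hk'1 -!compA Hu' Hkx //.
Qed.

Lemma PO (A B A' B' C0 : C) (f : hom A B) (g : hom B C0) (t : hom A A') (f' : hom A' B')
    (t' : hom B B') :
  E f g -> is_pushout f t f' t' -> exists g' : hom B' C0, g' ⊚ t' = g /\ E f' g'.
Proof.
move=> Hfg Hpo.
case: HE => _ _ _ _ [HE2 _].
case: (HE2 _ _ _ f t (ex_intro _ C0 (ex_intro _ g Hfg))) =>
  B2 [f2 [t2 [Hpo2 [Z2 [g2 Hg2]]]]].
have Hc := proj1 Hpo; have Hc2 := proj1 Hpo2.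
case: (po_ex Hpo2 Hc) => u [Hu1 Hu2].
case: (po_ex Hpo Hc2) => v [Hv1 Hv2].
have Huv : u ⊚ v = idm B'.
  by apply: (po_uniq Hpo); rewrite comp1m -compA ?Hv1 ?Hv2.
have Hvu : v ⊚ u = idm B2.
  by apply: (po_uniq Hpo2); rewrite comp1m -compA ?Hu1 ?Hu2.
have Edef : E f' (g2 ⊚ v).
  apply: (confl_iso (a := idm A') (b := u) (c := idm Z2) Hg2).
  - exact: iso_id.
  - by exists v.
  - exact: iso_id.
  - by rewrite compm1 Hu2.
  - by rewrite -compA Hvu compm1 comp1m.
have H0 : g ⊚ f = 0 ⊚ t by rewrite (confl0 Hfg) comp0l.
case: (po_ex Hpo H0) => g' [Hg'1 Hg'2].
exists g'; split => //.
apply: (E_iso_cok Edef); split => // W h Hh.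
have Hk := confl_cok Hfg.
have : (h ⊚ t') ⊚ f = 0 by rewrite -compA Hc compA Hh comp0l.
case/(cokernel_fac Hk) => x Hx.
have Hkx : x ⊚ g' = h.
  apply: (po_uniq Hpo); first by rewrite -compA Hg'1 Hx.
  by rewrite -compA Hg'2 comp0r Hh.
exists x; split => // u' Hu'.
apply: (cokernel_epi Hk); rewrite -Hg'1 !compA Hu' Hkx //.
Qed.

End Exact1.
Section Exact2.
Variables (C : PreAddCat) (E : confl_class C).
Hypothesis HE : is_exact_structure E.
Hypothesis Hadd : is_additive C.
Local Notation "g ⊚ f" := (Defs.comp g f) (at level 40, left associativity).

Lemma ra1 (S X : C) (p : hom S X) (i : hom X S) :
  p ⊚ i = idm X -> forall W (y : hom W X), p ⊚ (i ⊚ y) = y.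
Proof. by move=> H W y; rewrite compA H comp1m. Qed.
Lemma ra0 (S X Y : C) (p : hom S Y) (i : hom X S) :
  p ⊚ i = 0 -> forall W (y : hom W X), p ⊚ (i ⊚ y) = 0.
Proof. by move=> H W y; rewrite compA H comp0l. Qed.

Lemma zero_to (Z : C) : is_zero_obj Z -> forall X (f g : hom X Z), f = g.
Proof. by case=> _ H X f g; rewrite (H X f) (H X g). Qed.

Lemma E_id_zero (A : C) : exists Z (g : hom A Z), E (idm A) g /\ is_zero_obj Z.
Proof.
case: HE => _ _ [H0 _] _ _.
case: (H0 A) => Z [g Hg]; exists Z, g; split => //.
have Hk := confl_cok HE Hg.
have g0 : g = 0 by rewrite -(compm1 g) (confl0 HE Hg).
have HZ : forall X (h : hom Z X), h = 0.
  by move=> X h; apply: (cokernel_epi Hk); rewrite g0 comp0r comp0l.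
split => // X h; by rewrite -(comp1m h) (HZ Z (idm Z)) comp0l.
Qed.

Lemma ret_sec (X Y Z : C) (f : hom X Y) (g : hom Y Z) (r : hom Y X) :
  E f g -> r ⊚ f = idm X -> exists s, g ⊚ s = idm Z.
Proof.
move=> Hfg Hr.
have Hc := confl_cok HE Hfg.
have : (idm Y - f ⊚ r) ⊚ f = 0 by rewrite compBl comp1m -compA Hr compm1 subrr.
case/(cokernel_fac Hc) => s Hs; exists s.
apply: (cokernel_epi Hc); rewrite -compA Hs compBr compm1 compA (confl0 HE Hfg) comp0l.
by rewrite subr0 comp1m.
Qed.

Lemma sec_ret (X Y Z : C) (f : hom X Y) (g : hom Y Z) (s : hom Z Y) :
  E f g -> g ⊚ s = idm Z -> exists r, r ⊚ f = idm X.
Proof.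
move=> Hfg Hs.
have Hk := confl_ker HE Hfg.
have : g ⊚ (idm Y - s ⊚ g) = 0 by rewrite compBr compm1 compA Hs comp1m subrr.
case/(kernel_fac Hk) => r Hr; exists r.
apply: (kernel_mono Hk); rewrite compA Hr compBl comp1m -compA (confl0 HE Hfg) comp0r.
by rewrite subr0 compm1.
Qed.

Lemma defl_iso_r (Y Y' Z : C) (g : hom Y Z) (phi : hom Y' Y) (psi : hom Y Y') :
  deflation E g -> psi ⊚ phi = idm Y' -> phi ⊚ psi = idm Y -> deflation E (g ⊚ phi).
Proof.
case=> K [k Hk] H1 H2; exists K, (psi ⊚ k); exact: E_iso_mid.
Qed.

Lemma nil_iso (X : C) (x : hom X X) : x ⊚ x = 0 ->
  (idm X - x) ⊚ (idm X + x) = idm X /\ (idm X + x) ⊚ (idm X - x) = idm X.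
Proof.
move=> H; rewrite !(compDr, compBr, compBl, compDl, compNl, compNr, comp1m, compm1) H.
by rewrite subr0 addrNK oppr0 addr0 addrK.
Qed.

Lemma ker_exists (A B C0 : C) (v : hom A B) (f : hom B C0) :
  idempotent_complete C -> deflation E (f ⊚ v) -> exists L (i : hom L B), is_kernel i f.
Proof.
move=> IC Hd.
case: HE => _ _ _ _ [_ HE2].
case: (HE2 _ _ _ (f ⊚ v) f Hd) => Q [g' [t' [Hpb _]]].
have Hc := proj1 Hpb.
have : (f ⊚ v) ⊚ idm A = f ⊚ v by rewrite compm1.
case/(pb_ex Hpb) => s [Hs1 Hs2].
have He : (s ⊚ t') ⊚ (s ⊚ t') = s ⊚ t' by rewrite -compA (compA t') Hs1 comp1m.
case: (IC _ _ He) => L [kL HkL].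
have Ht0 : t' ⊚ kL = 0.
  by rewrite -[t']comp1m -Hs1 -!compA (compA s) (proj1 HkL) comp0r.
exists L, (g' ⊚ kL); split.
  by rewrite compA -Hc -compA Ht0 comp0r.
move=> W h Hh.
have : (f ⊚ v) ⊚ 0 = f ⊚ h by rewrite comp0r Hh.
case/(pb_ex Hpb) => u [Hu1 Hu2].
have : (s ⊚ t') ⊚ u = 0 by rewrite -compA Hu1 comp0r.
case/(kernel_fac HkL) => x Hx.
exists x; split; first by rewrite -compA Hx.
move=> x' Hx'; apply: (kernel_mono HkL); rewrite Hx.
apply: (pb_uniq Hpb); first by rewrite compA Ht0 comp0l Hu1.
by rewrite compA Hx' Hu2.
Qed.

Lemma obscure (A B C0 L : C) (v : hom A B) (f : hom B C0) (i : hom L B) :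
  is_kernel i f -> deflation E (f ⊚ v) -> E i f.
Proof.
move=> Hi Hd.
case: Hadd => _ Hbp.
case: (Hbp A B) => SAB [iA [iB [pA [pB [hAA hBB hAB hBA hsAB]]]]].
case: (Hbp C0 B) => SCB [jC [jB [qC [qB [hCC hBB' hCB hBC hsCB]]]]].
case: (Hbp A L) => SAL [kA [kL [rA [rL [hAA' hLL hAL hLA hsAL]]]]].
have R1 := ra1 hAA; have R2 := ra1 hBB; have R3 := ra0 hAB; have R4 := ra0 hBA.
have R5 := ra1 hCC; have R6 := ra1 hBB'; have R7 := ra0 hCB; have R8 := ra0 hBC.
have R9 := ra1 hAA'; have R10 := ra1 hLL; have R11 := ra0 hAL; have R12 := ra0 hLA.
have [Z [dB [HdB HZ]]] := E_id_zero B.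
have Hpb1 : is_pullback qC qB dB (0 : hom C0 Z).
  split; first exact: zero_to.
  move=> W x y _; exists (jB ⊚ x + jC ⊚ y); split.
    by rewrite !compDr R6 R8 R5 R7 addr0 add0r.
  move=> u' H1 H2; rewrite -[u']comp1m -hsCB compDl -!compA H1 H2 addrC //.
have [k1 [_ Ek1]] := PB HE HdB Hpb1.
(* step 2: qC - f qB is a deflation *)
have [Hn1 Hn2] := @nil_iso _ (jC ⊚ f ⊚ qB) ltac:(by rewrite -!compA (compA qB) hBC comp0l !comp0r).
have D2 : deflation E (qC ⊚ (idm SCB - jC ⊚ f ⊚ qB)).
  by apply: (defl_iso_r (ex_intro _ _ (ex_intro _ k1 Ek1)) Hn2 Hn1).
(* step 3: fv (+) 1 is a deflation *)
have Hpb3 : is_pullback (jC ⊚ (f ⊚ v) ⊚ pA + jB ⊚ pB) pA (f ⊚ v) qC.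
  split; first by rewrite compDr -!compA R5 R7 addr0.
  move=> W x y Hxy; exists (iA ⊚ x + iB ⊚ (qB ⊚ y)); split.
    split.
      by rewrite !compDr R1 R3 addr0.
    rewrite !compDl !compDr -!compA R1 R3 R4 R2 !comp0r add0r addr0.
    rewrite (compA f v x) Hxy.
    by rewrite !compA -compDl hsCB comp1m.
  move=> u' H1 H2; rewrite -[u']comp1m -hsAB compDl -!compA H1 -H2.
  by rewrite compDl compDr -!compA R8 R6 add0r.
case: Hd => K0 [k0 Hk0].
have [k3 [_ Ek3]] := PB HE Hk0 Hpb3.
case: HE => _ _ _ [_ HE1] _.
have D4 := HE1 _ _ _ _ _ (ex_intro _ _ (ex_intro _ k3 Ek3)) D2.
have [Hm1 Hm2] := @nil_iso _ (iB ⊚ v ⊚ pA) ltac:(by rewrite -!compA (compA pA) hAB comp0l !comp0r).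
have D5 := defl_iso_r D4 Hm1 Hm2.
have D5e : (qC ⊚ (idm SCB - jC ⊚ f ⊚ qB)) ⊚ (jC ⊚ (f ⊚ v) ⊚ pA + jB ⊚ pB) ⊚ (idm SAB + iB ⊚ v ⊚ pA)
     = - (f ⊚ pB).
  do 3 (rewrite ?(compDr, compDl, compBr, compBl, compNr, compNl, comp0l, comp0r, comp1m, compm1);
    rewrite -?compA ?(R1, R2, R3, R4, R5, R6, R7, R8)).
  by rewrite !(subr0, sub0r, add0r, addr0) addrAC subrr add0r.
rewrite D5e in D5.
case: D5 => K5 [k5 Ek5].
have Ek6 : E k5 (f ⊚ pB).
  apply: (confl_iso HE (a := idm K5) (b := idm SAB) (c := - idm C0) Ek5).
  - exact: iso_id.
  - exact: iso_id.
  - by exists (- idm C0); rewrite compNl compNr opprK comp1m.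
  - by rewrite compm1 comp1m.
  - by rewrite compm1 compNl compNr opprK comp1m.
have Hker : is_kernel (iA ⊚ rA + iB ⊚ i ⊚ rL) (f ⊚ pB).
  split.
    by rewrite compDr -!compA R4 R2 comp0r add0r compA (proj1 Hi) comp0l.
  move=> W h Hh.
  have : f ⊚ (pB ⊚ h) = 0 by rewrite compA.
  case/(kernel_fac Hi) => x Hx.
  exists (kA ⊚ (pA ⊚ h) + kL ⊚ x); split.
    do 3 (rewrite ?(compDr, compDl, compBr, compBl, compNr, compNl, comp0l, comp0r, comp1m, compm1); rewrite -?compA ?(R1, R2, R3, R4, R5, R6, R7, R8, R9, R10, R11, R12)).
    by rewrite addr0 add0r Hx !compA -compDl hsAB comp1m.
  move=> u' Hu'.
  have E1 : rA ⊚ u' = pA ⊚ h.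
    rewrite -Hu'; do 3 (rewrite ?(compDr, compDl, compBr, compBl, compNr, compNl, comp0l, comp0r, comp1m, compm1); rewrite -?compA ?(R1, R2, R3, R4, R5, R6, R7, R8, R9, R10, R11, R12)).
    by rewrite addr0.
  have E2 : rL ⊚ u' = x.
    apply: (kernel_mono Hi); rewrite Hx -Hu'; do 3 (rewrite ?(compDr, compDl, compBr, compBl, compNr, compNl, comp0l, comp0r, comp1m, compm1); rewrite -?compA ?(R1, R2, R3, R4, R5, R6, R7, R8, R9, R10, R11, R12)).
    by rewrite add0r.
  by rewrite -[u']comp1m -hsAL compDl -!compA E1 E2.
have Ek7 := E_iso_ker HE Ek6 Hker.
have Hpo : is_pushout (iA ⊚ rA + iB ⊚ i ⊚ rL) rL i pB.
  split; first by do 3 (rewrite ?(compDr, compDl, compBr, compBl, compNr, compNl, comp0l, comp0r, comp1m, compm1); rewrite -?compA ?(R1, R2, R3, R4, R5, R6, R7, R8, R9, R10, R11, R12, hAA, hBB, hAB, hBA, hCC, hBB', hCB, hBC, hAA', hLL, hAL, hLA)); rewrite add0r.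
  move=> W x y Hxy.
  have Hk1 : x ⊚ (iA ⊚ rA + iB ⊚ i ⊚ rL) ⊚ kA = y ⊚ rL ⊚ kA by rewrite Hxy.
  have Hk2 : x ⊚ (iA ⊚ rA + iB ⊚ i ⊚ rL) ⊚ kL = y ⊚ rL ⊚ kL by rewrite Hxy.
  do 3 (rewrite ?(compDr, compDl, compBr, compBl, compNr, compNl, comp0l, comp0r, comp1m, compm1) in Hk1 Hk2; rewrite -?compA ?(R1, R2, R3, R4, R5, R6, R7, R8, R9, R10, R11, R12, hAA, hBB, hAB, hBA, hCC, hBB', hCB, hBC, hAA', hLL, hAL, hLA) in Hk1 Hk2).
  rewrite ?addr0 ?add0r in Hk1 Hk2.
  exists (x ⊚ iB); split.
    split; last by rewrite compA in Hk2.
    rewrite -[x in RHS]compm1 -hsAB compDr !compA Hk1 comp0l add0r //.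
  move=> u' H1 H2.
  by rewrite -H1 -compA hBB compm1.
have [g' [Hg'1 Hg'2]] := PO HE Ek7 Hpo.
suff -> : f = g' by [].
by rewrite -[g']compm1 -hBB compA Hg'1 -compA hBB compm1.
Qed.
End Exact2.
Section Exact3.
Variables (C : PreAddCat) (E : confl_class C).
Hypothesis HE : is_exact_structure E.
Hypothesis EP : enough_projectives E.
Hypothesis EI : enough_injectives E.
Local Notation "g ⊚ f" := (Defs.comp g f) (at level 40, left associativity).

Lemma proj_Ext1 (P Y : C) : is_projective E P -> Ext1_zero E P Y.
Proof.
move=> HP M f g Hfg; case: (HP _ _ _ _ _ Hfg) => _ _ H.
by case: (H (idm P)) => s Hs; exists s.
Qed.

Lemma inj_Ext1 (Z I : C) : is_injective E I -> Ext1_zero E Z I.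
Proof.
move=> HI M f g Hfg; case: (HI _ _ _ _ _ Hfg) => _ _ H.
case: (H (idm I)) => r Hr; exact: (ret_sec HE Hfg Hr).
Qed.

Lemma zero_Ext1 (Z Y : C) : is_zero_obj Z -> Ext1_zero E Z Y.
Proof.
move=> [HZ _] M f g Hfg; exists 0; rewrite comp0r.
by rewrite (HZ _ (idm Z)).
Qed.

Lemma Ext1_lift (K I K' Z : C) (a : hom K I) (p : hom I K') (phi : hom Z K') :
  E a p -> Ext1_zero E Z K -> exists psi : hom Z I, p ⊚ psi = phi.
Proof.
move=> Hap HZ.
case: HE => _ _ _ _ [_ HE2].
case: (HE2 _ _ _ p phi (ex_intro _ _ (ex_intro _ a Hap))) => Q [g' [t' [Hpb _]]].
case: (PB HE Hap Hpb) => k' [_ Ek'].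
case: (HZ _ _ _ Ek') => s Hs.
by exists (t' ⊚ s); rewrite compA (proj1 Hpb) -compA Hs compm1.
Qed.

Lemma Ext1_ext (O P Z Y : C) (i : hom O P) (pi : hom P Z) (phi : hom O Y) :
  E i pi -> Ext1_zero E Z Y -> exists psi : hom P Y, psi ⊚ i = phi.
Proof.
move=> Hip HZ.
case: (EI Y) => J [Yp [j [q [HJ Hjq]]]].
case: (HJ _ _ _ _ _ Hip) => _ _ H3.
case: (H3 (j ⊚ phi)) => chi Hchi.
have : (q ⊚ chi) ⊚ i = 0 by rewrite -compA Hchi compA (confl0 HE Hjq) comp0l.
case/(cokernel_fac (confl_cok HE Hip)) => th Hth.
case: (Ext1_lift th Hjq HZ) => mu Hmu.
have : q ⊚ (chi - mu ⊚ pi) = 0 by rewrite compBr compA Hmu Hth subrr.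
case/(kernel_fac (confl_ker HE Hjq)) => psi Hpsi.
exists psi; apply: (kernel_mono (confl_ker HE Hjq)).
by rewrite compA Hpsi compBl Hchi -compA (confl0 HE Hip) comp0r subr0.
Qed.

Lemma Ext1_char (O P Z Y : C) (i : hom O P) (pi : hom P Z) :
  E i pi -> is_projective E P -> (forall phi : hom O Y, exists psi, psi ⊚ i = phi) ->
  Ext1_zero E Z Y.
Proof.
move=> Hip HP Hext N f g Hfg.
case: (HP _ _ _ _ _ Hfg) => _ _ H3.
case: (H3 pi) => la Hla.
have : g ⊚ (la ⊚ i) = 0 by rewrite compA Hla (confl0 HE Hip).
case/(kernel_fac (confl_ker HE Hfg)) => phi Hphi.
case: (Hext phi) => psi Hpsi.
have : (la - f ⊚ psi) ⊚ i = 0 by rewrite compBl -compA Hpsi Hphi subrr.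
case/(cokernel_fac (confl_cok HE Hip)) => s Hs.
exists s; apply: (cokernel_epi (confl_cok HE Hip)).
by rewrite -compA Hs compBr Hla compA (confl0 HE Hfg) comp0l subr0 comp1m.
Qed.

Lemma EC2 (Y' M X0 Z : C) (a : hom Y' M) (b : hom M X0) :
  E a b -> Ext1_zero E Z Y' -> Ext1_zero E Z X0 -> Ext1_zero E Z M.
Proof.
move=> Hab H1 H2.
case: (EP Z) => P [O [i [pi [HP Hip]]]].
apply: (Ext1_char Hip HP) => phi.
case: (Ext1_ext (b ⊚ phi) Hip H2) => psi Hpsi.
case: (HP _ _ _ _ _ Hab) => _ _ H3.
case: (H3 psi) => psi' Hpsi'.
have : b ⊚ (phi - psi' ⊚ i) = 0 by rewrite compBr compA Hpsi' Hpsi subrr.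
case/(kernel_fac (confl_ker HE Hab)) => chi Hchi.
case: (Ext1_ext chi Hip H1) => chi' Hchi'.
exists (psi' + a ⊚ chi'); rewrite compDl -compA Hchi' Hchi.
by rewrite addrC subrK.
Qed.

Lemma CS (K I K' Z' P Z : C) (j : hom K I) (p : hom I K') (i : hom Z' P) (pi : hom P Z) :
  E j p -> is_injective E I -> E i pi -> is_projective E P -> Ext1_zero E Z' K ->
  Ext1_zero E Z K'.
Proof.
move=> Hjp HI Hip HP HZ.
apply: (Ext1_char Hip HP) => phi.
case: (Ext1_lift phi Hjp HZ) => psi Hpsi.
case: (HI _ _ _ _ _ Hip) => _ _ H3.
case: (H3 psi) => chi Hchi.
by exists (p ⊚ chi); rewrite -compA Hchi.
Qed.

Lemma EC1proj (P U V Y : C) (a : hom P U) (b : hom U V) :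
  E a b -> is_projective E P -> Ext1_zero E V Y -> Ext1_zero E U Y.
Proof.
move=> Hab HP HV N f g Hfg.
case: (EI Y) => J [Yp [j [q [HJ Hjq]]]].
case: (HP _ _ _ _ _ Hfg) => _ _ HP3.
case: (HP3 a) => s Hs.
case: (HJ _ _ _ _ _ Hfg) => _ _ HJ3.
case: (HJ3 j) => h Hh.
case: (HJ _ _ _ _ _ Hab) => _ _ HJ3'.
case: (HJ3' (h ⊚ s)) => k Hk.
set D := h - k ⊚ g.
have HDf : D ⊚ f = j by rewrite /D compBl Hh -compA (confl0 HE Hfg) comp0r subr0.
have HDs : D ⊚ s = 0 by rewrite /D compBl -compA Hs Hk subrr.
have : (q ⊚ D) ⊚ f = 0 by rewrite -compA HDf (confl0 HE Hjq).
case/(cokernel_fac (confl_cok HE Hfg)) => phi Hphi.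
have : phi ⊚ a = 0 by rewrite -Hs compA Hphi -compA HDs comp0r.
case/(cokernel_fac (confl_cok HE Hab)) => phi' Hphi'.
case: (Ext1_lift phi' Hjq HV) => mu Hmu.
have : q ⊚ (D - mu ⊚ b ⊚ g) = 0.
  by rewrite compBr !compA Hmu Hphi' Hphi subrr.
case/(kernel_fac (confl_ker HE Hjq)) => r Hr.
have Hrf : r ⊚ f = idm Y.
  apply: (kernel_mono (confl_ker HE Hjq)).
  by rewrite compA Hr compBl HDf -compA (confl0 HE Hfg) comp0r subr0 compm1.
exact: (ret_sec HE Hfg Hrf).
Qed.

End Exact3.
Section Tilt.
Variables (C : PreAddCat) (E : confl_class C) (T : C -> Prop).
Hypothesis HE : is_exact_structure E.
Hypothesis Hadd : is_additive C.
Hypothesis EP : enough_projectives E.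
Hypothesis EI : enough_injectives E.
Local Notation "g ⊚ f" := (Defs.comp g f) (at level 40, left associativity).
Local Notation perpT := (perp E T).

Lemma retract_T (AC : add_closed T) (X U : C) (s : hom U X) (r : hom X U) :
  T X -> r ⊚ s = idm U -> T U.
Proof.
move=> TX Hrs; apply/AC.
exists 1%N, (fun _ => X), (fun _ => s), (fun _ => r); split => //.
by rewrite big_ord1.
Qed.

Lemma iso_T (AC : add_closed T) (X Z : C) (a : hom Z X) : T X -> is_iso a -> T Z.
Proof. by move=> TX [b [H1 H2]]; apply: (retract_T AC TX H1). Qed.

Lemma perp_Ext1 (X Y : C) : perpT Y -> T X -> Ext1_zero E X Y.
Proof.
move=> HY TX; apply: (HY X TX 1%N erefl X).
by exists (idm X); exact: iso_id.
Qed.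

Definition Hk (k : nat) (A : C) :=
  forall X, T X -> forall i : nat, (0 < i)%N -> Ext_zero E (i + k) X A.

Lemma Hk0 (A : C) : Hk 0 A <-> perpT A.
Proof.
by split=> H X TX i Hi; move: (H X TX i Hi); rewrite addn0.
Qed.

Lemma Hk_step (k : nat) (A I A1 : C) (j : hom A I) (p : hom I A1) :
  Hk k.+1 A -> E j p -> is_injective E I -> Hk k A1.
Proof.
move=> HA Hjp HI X TX i Hi Z HZ.
case: (EP Z) => P [O [io [pi [HP Hip]]]].
apply: (CS HE Hjp HI Hip HP).
apply: (HA X TX i Hi O); rewrite addnS /=.
have -> : (i + k)%N = ((i + k).-1).+1 by rewrite prednK // addn_gt0 Hi.
by exists Z, P, io, pi.
Qed.

Lemma perp_cosyz (Y I Yp : C) (j : hom Y I) (p : hom I Yp) :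
  perpT Y -> E j p -> is_injective E I -> perpT Yp.
Proof.
move=> HY Hjp HI; apply/Hk0; apply: (Hk_step _ Hjp HI).
by move=> X TX i Hi; apply: HY => //; rewrite addn1.
Qed.

Lemma chain_step (V X V' : C) (a : hom V X) (b : hom X V') :
  E a b -> T X -> (forall Y, perpT Y -> Ext1_zero E V' Y) ->
  forall Y, perpT Y -> Ext1_zero E V Y.
Proof.
move=> Hab TX IH Y HY N f g Hfg.
case: (EI Y) => I [Yp [j [p [HI Hjp]]]].
have HYp := perp_cosyz HY Hjp HI.
case: (HI _ _ _ _ _ Hfg) => _ _ H3.
case: (H3 j) => h Hh.
have : (p ⊚ h) ⊚ f = 0 by rewrite -compA Hh (confl0 HE Hjp).
case/(cokernel_fac (confl_cok HE Hfg)) => phi Hphi.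
case: (Ext1_ext HE EI phi Hab (IH _ HYp)) => psi Hpsi.
case: (Ext1_lift HE psi Hjp (perp_Ext1 HY TX)) => chi Hchi.
have : p ⊚ (h - chi ⊚ a ⊚ g) = 0 by rewrite compBr !compA Hchi Hpsi Hphi subrr.
case/(kernel_fac (confl_ker HE Hjp)) => r Hr.
have Hrf : r ⊚ f = idm Y.
  apply: (kernel_mono (confl_ker HE Hjp)).
  by rewrite compA Hr compBl Hh -compA (confl0 HE Hfg) comp0r subr0 compm1.
exact: (ret_sec HE Hfg Hrf).
Qed.

Lemma chain_Ext1 (m : nat) : forall V, coreschain E T m V -> forall Y, perpT Y -> Ext1_zero E V Y.
Proof.
elim: m => [|m IH] V [X [K [f [g [TX [Hfg HK]]]]]].
  by apply: (chain_step Hfg TX) => Y _; apply: zero_Ext1.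
by apply: (chain_step Hfg TX); apply: IH.
Qed.

Definition R (k : nat) (V : C) : Prop :=
  match k with 0 => is_zero_obj V | k'.+1 => coreschain E T k' V end.

Lemma R_step (k : nat) (W X K : C) (f : hom W X) (g : hom X K) :
  T X -> E f g -> R k K -> R k.+1 W.
Proof. by case: k => [|k] TX Hfg HK; exists X, K, f, g. Qed.

Lemma R_Ext1 (k : nat) (V Y : C) : R k V -> perpT Y -> Ext1_zero E V Y.
Proof. case: k => [|k] /= HV HY; [exact: zero_Ext1 | exact: chain_Ext1 HV Y HY]. Qed.

Hypothesis HG : forall Y, perpT Y ->
  exists (Y' W : C) (f : hom Y' W) (g : hom W Y), T W /\ perpT Y' /\ E f g.

Lemma hull (k : nat) : forall A, Hk k A ->
  exists (U V : C) (a : hom A U) (b : hom U V), E a b /\ perpT U /\ R k V.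
Proof.
elim: k => [|k IH] A HA.
  case: (E_id_zero HE A) => Z [g [Hg HZ]].
  by exists A, Z, (idm A), g; split => //; split => //; apply/Hk0.
case: (EI A) => I [A1 [j [p [HI Hjp]]]].
case: (IH A1 (Hk_step HA Hjp HI)) => U1 [V1 [a1 [b1 [Hab1 [HU1 HV1]]]]].
case: (HG HU1) => Y' [T0 [f0 [g0 [TT0 [HY' Hfg0]]]]].
case: HE => _ _ _ [_ HE1] [_ HE2].
case: (HE2 _ _ _ g0 a1 (ex_intro _ _ (ex_intro _ f0 Hfg0))) => W [gW [tW [Hpb _]]].
case: (PB HE Hfg0 Hpb) => kY [_ EkY].
have Hdef : deflation E (b1 ⊚ g0).
  apply: HE1; first by exists Y', f0.
  by exists A1, a1.
have EW : E tW (b1 ⊚ g0).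
  case: Hdef => K0 [k0 Hk0].
  apply: (E_iso_ker HE Hk0); split.
    by rewrite -compA (proj1 Hpb) compA (confl0 HE Hab1) comp0l.
  move=> X' h Hh.
  have : b1 ⊚ (g0 ⊚ h) = 0 by rewrite compA.
  case/(kernel_fac (confl_ker HE Hab1)) => x Hx.
  case: (pb_ex Hpb (esym Hx)) => u [Hu1 Hu2].
  exists u; split => // u' Hu'.
  apply: (pb_uniq Hpb); first by rewrite Hu1.
  apply: (kernel_mono (confl_ker HE Hab1)).
  by rewrite Hu2 compA -(proj1 Hpb) -compA Hu' Hx.
case: (HE2 _ _ _ p gW (ex_intro _ _ (ex_intro _ j Hjp))) => M [m1 [m2 [Hpb2 _]]].
case: (PB HE Hjp Hpb2) => jA [_ EjA].
case: (PB HE EkY (pb_sym Hpb2)) => kY' [_ EkY'].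
exists M, W, jA, m1; split => //; split.
  move=> X TX i Hi Z HZ.
  apply: (EC2 HE EP EI EkY'); first exact: (HY' X TX i Hi Z HZ).
  exact: inj_Ext1.
exact: (R_step TT0 EW HV1).
Qed.

End Tilt.
Section Main.
Variables (C : PreAddCat) (E : confl_class C) (T : C -> Prop) (n : nat).
Hypothesis HE : is_exact_structure E.
Hypothesis Hadd : is_additive C.
Hypothesis IC : idempotent_complete C.
Hypothesis EP : enough_projectives E.
Hypothesis EI : enough_injectives E.
Local Notation "g ⊚ f" := (Defs.comp g f) (at level 40, left associativity).
Local Notation perpT := (perp E T).

Lemma L1 : ZZ_tilting E n T -> forall P, is_projective E P -> Tvee_n E T n P.
Proof.
case=> AC Hpd [_ HG] P HP.
have HG' : forall Y, perpT Y ->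
  exists (Y' W : C) (f : hom Y' W) (g : hom W Y), T W /\ perpT Y' /\ E f g.
  move=> Y HY; case: (HG Y HY) => Y' [W [f [g [TW [HY' Hfg]]]]].
  by exists Y', W, f, g.
have HkP : Hk E T n P.
  move=> X TX i Hi; apply: (Hpd X TX) => //.
  by rewrite -[X in (X < _)%N]add0n ltn_add2r.
case: (hull HE EP EI HG' HkP) => U [V [a [b [Hab [HU HV]]]]].
case: (HG' U HU) => Y' [T0 [f0 [g0 [TT0 [HY' Hfg0]]]]].
have HUY : Ext1_zero E U Y'.
  apply: (EC1proj HE EI Hab HP).
  exact: (R_Ext1 HE EP EI HV HY').
case: (HUY _ _ _ Hfg0) => s Hs.
have TU : T U by apply: (retract_T AC TT0 Hs).
exists n; split => //.
exact: (R_step (k := n) TU Hab HV).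
Qed.

Lemma L2 : small_tilting E n T ->
  forall Y, perpT Y -> exists (Y' W : C) (f : hom Y' W) (g : hom W Y), T W /\ perpT Y' /\ E f g.
Proof.
case=> AC Hpd TT [w [Hw [_ Hgen]]] Hprec Y HY.
case: (Hprec Y HY) => T0 [f [TT0 Hf]].
case: (Hgen Y I) => Y1 [W [e1 [e [HwW [_ Hee]]]]].
case: (Hw W HwW) => n0 [m [_ Hm]].
have [X0 [K [a [b [TX0 [Hab HK]]]]]] :
  exists X0 K (a : hom W X0) (b : hom X0 K), T X0 /\ E a b /\ Ext1_zero E K Y.
  case: m Hm => [|m] [X0 [K [a [b [TX0 [Hab HK]]]]]].
    by exists X0, K, a, b; split => //; split => //; apply: zero_Ext1.
  by exists X0, K, a, b; split => //; split => //; apply: (chain_Ext1 HE EP EI HK).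
case: (Ext1_ext HE EI e Hab HK) => et Het.
case: (Hf X0 et TX0) => u Hu.
have Hd : deflation E (f ⊚ (u ⊚ a)) by rewrite compA Hu Het; exists Y1, e1.
case: (ker_exists HE IC Hd) => L [i Hi].
have Eif := obscure HE Hadd Hi Hd.
exists L, T0, i, f; split => //; split => //.
move=> X TX k Hk Z HZ.
case: (EP Z) => P [O [io [pi [HP Hip]]]].
apply: (Ext1_char HE Hip HP) => phi.
have HZT0 : Ext1_zero E Z T0 by apply: (TT T0 TT0 X TX k Hk Z HZ).
case: (Ext1_ext HE EI (i ⊚ phi) Hip HZT0) => psi Hpsi.
have : (f ⊚ psi) ⊚ io = 0 by rewrite -compA Hpsi compA (proj1 Hi) comp0l.
case/(cokernel_fac (confl_cok HE Hip)) => th Hth.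
have [mu Hmu] : exists mu : hom Z T0, f ⊚ mu = th.
  case: k Hk HZ => [//|[|k]] _ HZ.
    case: HZ => z Hz.
    by case: (Hf Z th (iso_T AC TX Hz)) => mu Hmu; exists mu.
  case: HZ => W' [P' [i' [p' [HW' [HP' Hip']]]]].
  have HW'Y : Ext1_zero E W' Y by apply: (HY X TX k.+1 erefl W' HW').
  case: (Ext1_ext HE EI th Hip' HW'Y) => th' Hth'.
  case: (HP' _ _ _ _ _ Eif) => _ _ H3.
  case: (H3 th') => mu' Hmu'.
  by exists (mu' ⊚ i'); rewrite compA Hmu'.
have : f ⊚ (psi - mu ⊚ pi) = 0 by rewrite compBr compA Hmu Hth subrr.
case/(kernel_fac (confl_ker HE Eif)) => psi' Hpsi'.
exists psi'; apply: (kernel_mono (confl_ker HE Eif)).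
by rewrite compA Hpsi' compBl Hpsi -compA (confl0 HE Hip) comp0r subr0.
Qed.

End Main.

Theorem theorem4p23 (C : PreAddCat) (E : confl_class C) (n : nat) (T : C -> Prop) :
  is_additive C -> is_exact_structure E -> idempotent_complete C ->
  enough_projectives E -> enough_injectives E ->
  ((ZZ_tilting E n T /\ precovering T (perp E T)) <-> small_tilting E n T) /\
  (small_tilting E n T <-> (AS_tilting E n T /\ precovering T (perp E T))) /\
  ((ZZ_tilting E n T /\ precovering T (perp E T)) \/ small_tilting E n T \/
     (AS_tilting E n T /\ precovering T (perp E T)) ->
   forall P : C, is_projective E P -> Tvee_n E T n P).
Proof.
move=> Hadd HE IC EP EI.
have projgen : forall w : C -> Prop, (forall P, is_projective E P -> w P) ->
    rel_generator E w (fun _ => True).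
  move=> w Hw; split => // X _.
  case: (EP X) => P [O [f [g [HP Hfg]]]].
  by exists O, P, f, g; split; [apply: Hw | split].
have ZZ_small : ZZ_tilting E n T /\ precovering T (perp E T) -> small_tilting E n T.
  move=> [HZZ Hprec]; have HZZ' := HZZ; case: HZZ' => AC Hpd [TT HG].
  split => //.
  exists (is_projective E); split; last exact: projgen.
  by move=> P HP; exists n; apply: (L1 HE EP EI HZZ).
have small_ZZ : small_tilting E n T -> ZZ_tilting E n T /\ precovering T (perp E T).
  move=> Hs; have Hs' := Hs; case: Hs' => AC Hpd TT _ Hprec.
  split => //; split => //; split => // Y HY.
  case: (L2 HE Hadd IC EP EI Hs HY) => Y' [W [f [g [TW [HY' Hfg]]]]].
  by exists Y', W, f, g.
have AS_small : AS_tilting E n T /\ precovering T (perp E T) -> small_tilting E n T.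
  move=> [[AC Hpd TT HPT] Hprec]; split => //.
  by exists (is_projective E); split; last exact: projgen.
have small_AS : small_tilting E n T -> AS_tilting E n T /\ precovering T (perp E T).
  move=> Hs; have [HZZ Hprec] := small_ZZ Hs.
  case: Hs => AC Hpd TT _ _; split => //; split => // P HP.
  by exists n; apply: (L1 HE EP EI HZZ).
split; first by split.
split; first by split.
move=> H P HP.
have HZZ : ZZ_tilting E n T.
  case: H => [[]|[Hs|/AS_small Hs]] //; by case: (small_ZZ Hs).
exact: (L1 HE EP EI HZZ).
Qed.
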